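(* Let $\Theta$ be a parameter set, where each $\theta\in\Theta$ determines a probability distribution $p_\theta$ over trajectories, and write $KL(\theta'\|\theta):=KL(p_{\theta'}\|p_\theta)$. Let $C:\Theta\to\mathbb{R}$ be a cost function, and for $\alpha>0$ let $J^{\alpha}(\theta)=\inf_{\theta'}\big(\alpha KL(\theta'\|\theta)+C(\theta')\big)$. For a step size $\mathcal{E}>0$ define the direct update $\Theta^{C}_{\mathcal{E}}(\theta)=\operatorname{argmin}_{\theta':\,KL(\theta'\|\theta)\le\mathcal{E}} C(\theta')$, the smoothed update $R^{J^\alpha}_{\mathcal{E}}(\theta)=\operatorname{argmin}_{\theta':\,KL(\theta'\|\theta)\le\mathcal{E}} J^{\alpha}(\theta')$, and the optimal two-step cost $$C^*_{\mathcal{E},\mathcal{E}'}(\theta)=\min_{\theta':\,KL(\theta'\|\theta)\le\mathcal{E}}\ \min_{\theta'':\,KL(\theta''\|\theta')\le\mathcal{E}'} C(\theta'')=\min_{\theta':\,KL(\theta'\|\theta)\le\mathcal{E}} C\big(\Theta^{C}_{\mathcal{E}'}(\theta')\big).$$ Then: (1) For every $\theta$, every $\mathcal{E}>0$ and every $\alpha>0$ there exists $\mathcal{E}'=\mathcal{E}'_\alpha(\theta)$ (depending on $\theta$ and $\alpha$) such that, setting $\Theta'=R^{J^\alpha}_{\mathcal{E}}(\theta)$ and $\Theta''=\Theta^{C}_{\mathcal{E}'}(\Theta')$, one has $C(\Theta'')=C^*_{\mathcal{E},\mathcal{E}'}(\theta)$; i.e. a smoothed update with step size $\mathcal{E}$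 followed by a direct update with step size $\mathcal{E}'$ is an optimal two-step update. (2) The step size $\mathcal{E}'_\alpha(\theta)$ in (1) is monotonically decreasing (non-increasing) as a function of $\alpha$.
   Context: All minima, infima and argmins appearing above are assumed to be attained (the paper treats them as well-defined minimizers). The quantity $KL(\theta'\|\theta)$ is the Kullback–Leibler divergence between the trajectory distributions induced by the parameters $\theta'$ and $\theta$, and is nonnegative with $KL(\theta\|\theta)=0$. *)

(* Defs.v *)
From HB Require Import structures.
From mathcomp Require Import all_boot all_order all_algebra.
From mathcomp Require Import all_classical all_reals.
Set Implicit Arguments. Unset Strict Implicit. Unset Printing Implicit Defensive.
Import Order.TTheory GRing.Theory Num.Theory.
Local Open Scope classical_set_scope.
Local Open Scope ring_scope.

Section Defs.
Variables (R : realType) (T : Type).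

Definition kball (KL : T -> T -> R) (eps : R) (t : T) : set T :=
  [set t' | KL t' t <= eps].

Definition is_argmin (A : set T) (f : T -> R) (x : T) : Prop :=
  A x /\ forall y, A y -> f x <= f y.

Definition Jal (KL : T -> T -> R) (C : T -> R) (a : R) (t : T) : R :=
  inf (range (fun t' => a * KL t' t + C t')).

Definition Cstar (KL : T -> T -> R) (C : T -> R) (E E' : R) (t : T) : R :=
  inf [set inf (C @` kball KL E' t') | t' in kball KL E t].

End Defs.

(* Main.v *)
Require Import Defs.
From HB Require Import structures.
From mathcomp Require Import all_boot all_order all_algebra.
From mathcomp Require Import all_classical all_reals.
From mathcomp Require Import lra.
Import Order.TTheory GRing.Theory Num.Theory.
Local Open Scope classical_set_scope.
Local Open Scope ring_scope.


Lemma inf_attained (R : realType) (A : set R) (x : R) :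
  A x -> (forall y, A y -> x <= y) -> inf A = x.
Proof.
move=> Ax lb; apply/le_anti/andP; split.
- by apply: (ge_inf (E := A)) => //; exists x.
- by apply: lb_le_inf => //; exists x.
Qed.

Lemma Jal_min (R : realType) (T : Type) (KL : T -> T -> R) (C : T -> R) a u q :
  is_argmin setT (fun v => a * KL v u + C v) q ->
  Jal KL C a u = a * KL q u + C q /\ forall v, Jal KL C a u <= a * KL v u + C v.
Proof.
move=> [_ hq].
have E : Jal KL C a u = a * KL q u + C q.
  by apply: inf_attained; [exists q | move=> y [v _ <-]; apply: hq].
by split => // v; rewrite E; apply: hq.
Qed.
Arguments Jal_min {R T KL C a u q}.

Lemma key (R : realType) (T : Type) (KL : T -> T -> R) (C : T -> R)
  (KL_ge0 : forall t t' : T, 0 <= KL t' t)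
  (hJ : forall (a : R) (t : T), 0 < a ->
          exists t', is_argmin setT (fun u => a * KL u t + C u) t')
  (hD : forall (E' : R) (t : T), 0 <= E' ->
          exists t', is_argmin (kball KL E' t) C t')
  t E a t1 p : 0 < a ->
  is_argmin (kball KL E t) (Jal KL C a) t1 ->
  is_argmin setT (fun u => a * KL u t1 + C u) p ->
  forall t2, is_argmin (kball KL (KL p t1) t1) C t2 ->
    C t2 = Cstar KL C E (KL p t1) t.
Proof.
move=> a0 [t1E t1min] hp t2 [t2b t2min].
have [Jt1 _] := Jal_min hp.
have Cp : C t2 = C p.
  apply/le_anti/andP; split; first by apply: t2min; rewrite /kball /= .
  have := hp.2 t2 I; rewrite /kball /=  in t2b *.
  have : a * KL t2 t1 <= a * (KL p t1) by rewrite ler_pM2l.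
  move=> h1 h2; lra.
have mball : forall u s, is_argmin (kball KL (KL p t1) u) C s ->
    inf (C @` kball KL (KL p t1) u) = C s.
  by move=> u s [sb smin]; apply: inf_attained; [exists s | move=> y [v vb <-]; apply: smin].
rewrite Cp /Cstar.
symmetry; apply: (@inf_attained R).
  by exists t1 => //; rewrite (mball t1 t2) ?Cp.
move=> y [u uE <-].
have [s hs] := hD (KL p t1) u (KL_ge0 _ _).
rewrite (mball u s hs).
have [q hq] := hJ a u a0.
have [_ Ju] := Jal_min hq.
have := t1min u uE; rewrite Jt1 => h.
have := Ju s; have := hs.1; rewrite /kball /= => sb.
have : a * KL s u <= a * (KL p t1) by rewrite ler_pM2l.
move=> h1 h2; lra.
Qed.
Arguments key {R T KL C} KL_ge0 hJ hD {t E a t1 p}.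

Theorem theorem1 (R : realType) (T : Type) (KL : T -> T -> R) (C : T -> R)
  (KL_ge0 : forall t t' : T, 0 <= KL t' t)
  (KL_id : forall t : T, KL t t = 0)
  (* all minima / argmins in the statement are attained *)
  (hJ : forall (a : R) (t : T), 0 < a ->
          exists t', is_argmin setT (fun u => a * KL u t + C u) t')
  (hR : forall (a E : R) (t : T), 0 < a -> 0 < E ->
          exists t', is_argmin (kball KL E t) (Jal KL C a) t')
  (hD : forall (E' : R) (t : T), 0 <= E' ->
          exists t', is_argmin (kball KL E' t) C t')
  (hCs : forall (E E' : R) (t : T), 0 < E -> 0 <= E' ->
          exists t', is_argmin (kball KL E t)
                       (fun u => inf (C @` kball KL E' u)) t') :
  (* (1) *)
  (forall (t : T) (E a : R), 0 < E -> 0 < a ->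
     forall t1 : T, is_argmin (kball KL E t) (Jal KL C a) t1 ->
     exists E' : R, 0 <= E' /\
       forall t2 : T, is_argmin (kball KL E' t1) C t2 ->
         C t2 = Cstar KL C E E' t)
  /\
  (* (2): the step size E'_alpha(t) can be chosen as a non-increasing
     function of alpha, for the smoothed updates rho alpha = R^{J^alpha}_E(t) *)
  (forall (t : T) (E : R), 0 < E ->
     forall rho : R -> T,
       (forall a : R, 0 < a -> is_argmin (kball KL E t) (Jal KL C a) (rho a)) ->
     exists e : R -> R,
       (forall a : R, 0 < a ->
          0 <= e a /\
          forall t2 : T, is_argmin (kball KL (e a) (rho a)) C t2 ->
            C t2 = Cstar KL C E (e a) t)
       /\ (forall a b : R, 0 < a -> a <= b -> e b <= e a)).
Proof.
split.
  move=> t E a E0 a0 t1 ht1.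
  have [p hp] := hJ a t1 a0.
  exists (KL p t1); split; first exact: KL_ge0.
  exact: (key KL_ge0 hJ hD a0 ht1 hp).
move=> t E E0 rho hrho.
have hJ2 : forall a : R, exists p : T, 0 < a ->
    is_argmin setT (fun u => a * KL u (rho a) + C u) p.
  move=> a; case: (pselect (0 < a)) => [a0|na].
    by have [p hp] := hJ a (rho a) a0; exists p.
  by exists t.
have [f hf] := choice hJ2.
exists (fun a => KL (f a) (rho a)); split.
  move=> a a0; split; first exact: KL_ge0.
  exact: (key KL_ge0 hJ hD a0 (hrho a a0) (hf a a0)).
move=> a b a0 ab.
have [->|ne] := eqVneq a b; first exact: lexx.
have ltab : a < b by rewrite lt_neqAle ne.
have b0 : 0 < b by apply: lt_trans ltab.
have [Ja Jav] := Jal_min (hf a a0).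
have [Jb Jbv] := Jal_min (hf b b0).
have h1 := (hrho a a0).2 (rho b) (hrho b b0).1.
have h2 := (hrho b b0).2 (rho a) (hrho a a0).1.
have [qa hqa] := hJ a (rho b) a0.
have [_ Jab] := Jal_min hqa.
have [qb hqb] := hJ b (rho a) b0.
have [_ Jba] := Jal_min hqb.
have i1 := Jab (f b). have i2 := Jba (f a).
move: Ja Jb i1 i2 h1 h2.
move: (KL (f a) (rho a)) (KL (f b) (rho b)) => ea eb Ja Jb i1 i2 h1 h2.
have : (b - a) * (eb - ea) <= 0 by nra.
move=> h; nra.
Qed.
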